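(* Let $(E,\mathcal{D},\rho)$ be a U-matroid and let $a\in E$ with $\{a\}\notin\mathcal{D}$. Then $(E,\mathcal{D}[a],\rho_a)$ is a U-matroid (and hence a lattice extension of $(E,\mathcal{D},\rho)$), where $\rho_a$ is the generous atom extension of $\rho$ to $\mathcal{D}[a]$.
   Context: An accessible distributive lattice on a finite set $E$ is a family $\mathcal{D}\subseteq 2^E$ containing $\emptyset$ and $E$, closed under union and intersection, such that every nonempty $A\in\mathcal{D}$ contains some $x$ with $A\setminus\{x\}\in\mathcal{D}$. A U-matroid is a triple $(E,\mathcal{D},\rho)$ with $\mathcal{D}$ an accessible distributive lattice and $\rho:\mathcal{D}\to\mathbb{N}$ satisfying $\rho(\emptyset)=0$; $\rho(A)\le\rho(B)$ whenever $A\subseteq B$; $\rho(A)+\rho(B)\ge\rho(A\cup B)+\rho(A\cap B)$; and $\rho(A\cup\{e\})-\rho(A)\le1$ whenever $A,A\cup\{e\}\in\mathcal{D}$. For $S\subseteq E$, $\sup_\mathcal{D}(S)=\bigcap\{B\in\mathcal{D}:B\supseteq S\}$. For $a\in E$ with $\{a\}\notin\mathcal{D}$, let $\mathcal{D}[a]=\mathcal{D}\cup\{S\cup\{a\}:S\in\mathcal{D}\}$. The generous atom extension $\rho_a:\mathcal{D}[a]\to\mathbb{N}$ is: $\rho_a(S)=\rho(S)$ if $S\in\mathcal{D}$; if $S\notin\mathcal{D}$ (so $S\setminus\{a\}\in\mathcal{D}$), $\rho_a(S)=\rho(S\setminus\{a\})$ when $\rho(S\setminus\{a\})=\rho(\sup_\mathcal{D}(S))$,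 and $\rho_a(S)=\rho(S\setminus\{a\})+1$ when $\rho(S\setminus\{a\})<\rho(\sup_\mathcal{D}(S))$. A lattice extension of $(E,\mathcal{D},\rho)$ is a U-matroid $(E,\mathcal{D}',\rho')$ with $\mathcal{D}\subseteq\mathcal{D}'$ and $\rho'|_\mathcal{D}=\rho$. *)

(* Defs.v *)
(* Ground set E is a finType; subsets are {set E};
   a family of subsets is {set {set E}}; rank functions are total
   functions {set E} -> nat, only their values on the lattice matter. *)
From mathcomp Require Import all_boot.
Set Implicit Arguments. Unset Strict Implicit. Unset Printing Implicit Defensive.

Section UMatroid.
Variable E : finType.

Definition accessible_distr_lattice (D : {set {set E}}) : Prop :=
  [/\ set0 \in D, [set: E] \in D,
      (forall A B, A \in D -> B \in D -> A :|: B \in D),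
      (forall A B, A \in D -> B \in D -> A :&: B \in D) &
      (forall A, A \in D -> A != set0 -> exists2 x, x \in A & A :\ x \in D)].

Definition U_matroid (D : {set {set E}}) (rho : {set E} -> nat) : Prop :=
  [/\ accessible_distr_lattice D,
      rho set0 = 0,
      (forall A B, A \in D -> B \in D -> A \subset B -> rho A <= rho B),
      (forall A B, A \in D -> B \in D ->
          rho (A :|: B) + rho (A :&: B) <= rho A + rho B) &
      (forall A e, A \in D -> A :|: [set e] \in D ->
          rho (A :|: [set e]) <= (rho A).+1)].

Definition supD (D : {set {set E}}) (S : {set E}) : {set E} :=
  \bigcap_(B in D | S \subset B) B.

Definition Dext (D : {set {set E}}) (a : E) : {set {set E}} :=
  D :|: [set S :|: [set a] | S in D].

Definition rho_gen (D : {set {set E}}) (rho : {set E} -> nat) (a : E)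
    (S : {set E}) : nat :=
  if S \in D then rho S
  else if rho (S :\ a) == rho (supD D S) then rho (S :\ a)
       else (rho (S :\ a)).+1.

Definition lattice_extension (D : {set {set E}}) (rho : {set E} -> nat)
    (D' : {set {set E}}) (rho' : {set E} -> nat) : Prop :=
  [/\ U_matroid D' rho', D \subset D' & (forall A, A \in D -> rho' A = rho A)].

End UMatroid.

(* Main.v *)
Require Import Defs.
From mathcomp Require Import all_boot.
Set Implicit Arguments. Unset Strict Implicit. Unset Printing Implicit Defensive.

Lemma supD_in (E : finType) (D : {set {set E}}) (S : {set E}) :
  [set: E] \in D -> (forall A B, A \in D -> B \in D -> A :&: B \in D) ->
  supD D S \in D.
Proof.
move=> hT hI; rewrite /supD; apply: (big_ind (fun X => X \in D)) => //.
by move=> i /andP[].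
Qed.

Lemma supD_sup (E : finType) (D : {set {set E}}) (S : {set E}) : S \subset supD D S.
Proof. by apply/bigcapsP => i /andP[]. Qed.

Lemma supD_min (E : finType) (D : {set {set E}}) (S Z : {set E}) :
  Z \in D -> S \subset Z -> supD D S \subset Z.
Proof. by move=> hZ hSZ; apply: bigcap_inf; rewrite hZ. Qed.

Lemma Dext_out (E : finType) (D : {set {set E}}) a (X : {set E}) :
  X \in Dext D a -> X \notin D -> X :\ a \in D /\ a \in X.
Proof.
rewrite /Dext inE => /orP[->//|/imsetP[S hS ->]] hn.
have aS : a \notin S.
  by apply/negP=> aS; move: hn; rewrite (setUidPl _) ?hS // sub1set.
split; last by rewrite !inE eqxx orbT.
by rewrite setDUl setDv setU0 (setDidPl _) // disjoint_sym disjoints1.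
Qed.

Lemma Dext_in (E : finType) (D : {set {set E}}) a (X : {set E}) :
  X \in D -> X \in Dext D a.
Proof. by rewrite /Dext inE => ->. Qed.

Lemma Dext_inU (E : finType) (D : {set {set E}}) a (X : {set E}) :
  X \in D -> X :|: [set a] \in Dext D a.
Proof. by move=> h; rewrite /Dext inE; apply/orP; right; apply/imsetP; exists X. Qed.

Lemma access_top (E : finType) (D : {set {set E}}) :
  accessible_distr_lattice D ->
  forall (T S : {set E}) z, S \in D -> T \in D -> S \subset T -> z \in T :\: S ->
  exists2 y, y \in T :\: S & T :\ y \in D.
Proof.
case=> h0 hT hU hI hA T.
elim: {T}#|T| {-2}T (leqnn #|T|) => [|n IH] T hn S z hS hTD hST hz.
  have: #|T| = 0 by apply/eqP; rewrite -leqn0.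
  by move/eqP; rewrite cards_eq0 => /eqP T0; move: hz; rewrite T0 !inE andbF.
have Tn0 : T != set0 by apply/set0Pn; exists z; move: hz; rewrite inE => /andP[].
have [x xT TxD] := hA T hTD Tn0.
case xS: (x \in S); last by exists x => //; rewrite inE xS xT.
have hSx : S :\ x \in D.
  suff -> : S :\ x = S :&: (T :\ x) by apply: hI.
  by apply/setP=> w; rewrite !inE; case: (w \in S) (w == x) (w \in T) (subsetP hST w) => [] [] [] //= ->.
have hlt : #|T :\ x| <= n.
  by rewrite -ltnS; apply: leq_trans hn; rewrite (cardsD1 x T) xT.
have hsub : S :\ x \subset T :\ x by apply: setSD.
have hz' : z \in (T :\ x) :\: (S :\ x).
  move: hz; rewrite !inE => /andP[zS zT].
  have zx : z != x by apply/eqP=> zx; rewrite zx xS in zS.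
  by rewrite zx zT (negbTE zS).
have [y hy hyD] := IH _ hlt _ _ hSx TxD hsub hz'.
move: hy; rewrite !inE => /andP[hyS /andP[yx yT]].
have yS : y \notin S by move: hyS; rewrite yx.
exists y; first by rewrite inE yS yT.
have -> : T :\ y = (T :\ x :\ y) :|: S.
  apply/setP=> w; rewrite !inE.
  case wS: (w \in S).
    rewrite (subsetP hST w wS) !andbT orbT; apply/eqP=> wy; by rewrite -wy wS in yS.
  rewrite orbF; case: eqP => [->|_] //=; rewrite ?andbF //.
  case: eqP => [wx|] //=.
  by rewrite wx xS in wS.
by apply: hU.
Qed.

Definition Ua (E : finType) (a : E) (Y : {set E}) (k : bool) :=
  Y :|: (if k then [set a] else set0).

Lemma fD (E : finType) (D : {set {set E}}) rho a (X : {set E}) :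
  X \in D -> rho_gen D rho a X = rho X.
Proof. by rewrite /rho_gen => ->. Qed.

Lemma f_out (E : finType) (D : {set {set E}}) rho a (X : {set E}) :
  U_matroid D rho -> X \in Dext D a -> X \notin D ->
  [/\ rho (X :\ a) <= rho_gen D rho a X,
      rho_gen D rho a X <= (rho (X :\ a)).+1,
      rho_gen D rho a X <= rho (supD D X) &
      (rho_gen D rho a X = rho (supD D X) \/
       rho_gen D rho a X = (rho (X :\ a)).+1)].
Proof.
case=> [[h0 hT hU hI hA] r0 rm rs ru] hX hXD.
have [hXa aX] := Dext_out hX hXD.
have hs := supD_in X hT hI.
have hle : rho (X :\ a) <= rho (supD D X).
  by apply: rm => //; apply: subset_trans (supD_sup D X); apply: subsetDl.
rewrite /rho_gen (negbTE hXD).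
case: eqP => [e|ne]; first by rewrite leqnn leqnSn e leqnn; split => //; left.
split => //; last by right.
by rewrite ltn_neqAle hle andbT; apply/eqP.
Qed.

Lemma f_bound (E : finType) (D : {set {set E}}) rho a (X Y : {set E}) (k : bool) :
  U_matroid D rho -> X \in Dext D a -> Y \in D -> X \subset Ua a Y k ->
  rho_gen D rho a X <= rho Y + k.
Proof.
move=> hM; have := hM; case=> [[h0 hT hU hI hA] r0 rm rs ru] hX hY hsub.
case XD: (X \in D).
  rewrite fD //.
  case: k hsub => hsub; rewrite /Ua ?setU0 in hsub; last by rewrite addn0; apply: rm.
  case aX: (a \in X).
    have eX : (X :&: Y) :|: [set a] = X.
      apply/setP=> w; rewrite !inE; case: eqP => [->|ne]; first by rewrite aX orbT.
      rewrite orbF; case wX: (w \in X) => //=.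
      by move: (subsetP hsub w wX); rewrite !inE => /orP[]// /eqP.
    have hXY : X :&: Y \in D by apply: hI.
    have := ru _ a hXY; rewrite eX => /(_ XD) h.
    rewrite addn1; apply: leq_trans h _.
    by rewrite ltnS; apply: rm => //; apply: subsetIr.
  apply: leq_trans (leq_addr _ _); apply: rm => //.
  apply/subsetP=> w wX; move: (subsetP hsub w wX); rewrite !inE => /orP[]// /eqP e.
  by rewrite -e wX in aX.
have [h1 h2 h3 _] := f_out hM hX (negbT XD).
have [hXa aX] := Dext_out hX (negbT XD).
case: k hsub => hsub.
  rewrite addn1; apply: leq_trans h2 _; rewrite ltnS; apply: rm => //.
  apply/subsetP=> w; rewrite !inE => /andP[wa wX]; move: (subsetP hsub w wX).
  by rewrite /Ua !inE (negbTE wa) orbF.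
rewrite addn0; apply: leq_trans h3 _; apply: rm => //; first exact: supD_in.
by apply: supD_min => //; rewrite /Ua setU0 in hsub.
Qed.

Lemma f_rep (E : finType) (D : {set {set E}}) rho a (X : {set E}) :
  U_matroid D rho -> X \in Dext D a ->
  exists Y, exists k : bool, [/\ Y \in D, rho_gen D rho a X = rho Y + k & X \subset Ua a Y k].
Proof.
move=> hM hX; have := hM; case=> [[h0 hT hU hI hA] r0 rm rs ru].
case XD: (X \in D).
  by exists X, false; rewrite fD // addn0 /Ua setU0.
have [h1 h2 h3 [e|e]] := f_out hM hX (negbT XD).
  exists (supD D X), false; rewrite addn0 /Ua setU0 e; split => //.
    exact: supD_in.
  exact: supD_sup.
have [hXa aX] := Dext_out hX (negbT XD).
exists (X :\ a), true; rewrite addn1; split => //.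
by apply/subsetP=> w wX; rewrite /Ua !inE wX andbT; case: eqP; rewrite ?orbT.
Qed.

Lemma DextP (E : finType) (D : {set {set E}}) a (X : {set E}) :
  X \in Dext D a <-> X \in D \/ X :\ a \in D.
Proof.
split.
  move=> hX; case XD: (X \in D); first by left.
  by right; case: (Dext_out hX (negbT XD)).
case=> [|h]; first exact: Dext_in.
case aX: (a \in X).
  have -> : X = (X :\ a) :|: [set a].
    by apply/setP=> w; rewrite !inE; case: eqP => [->|]; rewrite ?aX ?orbT ?orbF.
  exact: Dext_inU.
apply: Dext_in; suff <- : X :\ a = X by [].
by apply/setP=> w; rewrite !inE; case: eqP => [->|]; rewrite ?aX.
Qed.

Lemma Dext_lattice (E : finType) (D : {set {set E}}) a :
  accessible_distr_lattice D -> accessible_distr_lattice (Dext D a).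
Proof.
case=> h0 hT hU hI hA; split.
- exact: Dext_in.
- exact: Dext_in.
- move=> A B /DextP[hA'|hA'] /DextP[hB'|hB']; apply/DextP.
  + by left; apply: hU.
  + case aA: (a \in A).
      left; suff <- : A :|: (B :\ a) = A :|: B by apply: hU.
      apply/setP=> w; rewrite !inE; case: eqP => [->|]; by rewrite ?aA.
    right; rewrite setDUl; suff -> : A :\ a = A by apply: hU.
    by apply/setP=> w; rewrite !inE; case: eqP => [->|]; rewrite ?aA.
  + case aB: (a \in B).
      left; suff <- : (A :\ a) :|: B = A :|: B by apply: hU.
      apply/setP=> w; rewrite !inE; case: eqP => [->|]; by rewrite ?aB ?orbT.
    right; rewrite setDUl; suff -> : B :\ a = B by apply: hU.
    by apply/setP=> w; rewrite !inE; case: eqP => [->|]; rewrite ?aB.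
  + by right; rewrite setDUl; apply: hU.
- move=> A B /DextP[hA'|hA'] /DextP[hB'|hB']; apply/DextP.
  + by left; apply: hI.
  + right; have -> : A :&: B :\ a = A :&: (B :\ a).
      by apply/setP=> w; rewrite !inE; case: (w == a); case: (w \in A).
    by apply: hI.
  + right; have -> : A :&: B :\ a = (A :\ a) :&: B.
      by apply/setP=> w; rewrite !inE; case: (w == a); case: (w \in A).
    by apply: hI.
  + right; have -> : A :&: B :\ a = (A :\ a) :&: (B :\ a).
      by apply/setP=> w; rewrite !inE; case: (w == a); case: (w \in A).
    by apply: hI.
- move=> X hX Xn0; case XD: (X \in D).
    by have [x xX h] := hA X XD Xn0; exists x => //; apply: Dext_in.
  have [hXa aX] := Dext_out hX (negbT XD).
  by exists a => //; apply: Dext_in.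
Qed.

Lemma f_mono (E : finType) (D : {set {set E}}) rho a (A B : {set E}) :
  U_matroid D rho -> A \in Dext D a -> B \in Dext D a -> A \subset B ->
  rho_gen D rho a A <= rho_gen D rho a B.
Proof.
move=> hM hA hB hAB; have [Y [k [hY -> sB]]] := f_rep hM hB.
by apply: f_bound => //; apply: subset_trans sB.
Qed.

Lemma choose_k (E : finType) a (A B YA YB : {set E}) (kA kB : bool) :
  A \subset Ua a YA kA -> B \subset Ua a YB kB ->
  exists ku : bool, exists ki : bool, [/\ ku + ki = kA + kB,
    A :|: B \subset Ua a (YA :|: YB) ku & A :&: B \subset Ua a (YA :&: YB) ki].
Proof.
move=> /subsetP sA /subsetP sB.
have H : forall ku ki : bool, ku + ki = kA + kB ->
   (forall w, w \in A -> w \in Ua a (YA :|: YB) ku) ->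
   (forall w, w \in A :&: B -> w \in Ua a (YA :&: YB) ki) ->
   (forall w, w \in B -> w \in Ua a (YA :|: YB) ku) ->
   exists ku0 : bool, exists ki0 : bool, [/\ ku0 + ki0 = kA + kB,
    A :|: B \subset Ua a (YA :|: YB) ku0 & A :&: B \subset Ua a (YA :&: YB) ki0].
  move=> ku ki e h1 h2 h3; exists ku, ki; split => //; apply/subsetP => // w.
  by rewrite inE => /orP[/h1|/h3].
case: kA kB sA sB H => [] [] sA sB H.
- apply: (H true true) => // w; move: (sA w) (sB w); rewrite /Ua !inE;
  case: (w \in A); case: (w \in B); case: (w \in YA); case: (w \in YB) => //=.
- case aYB: (a \in YB).
  + apply: (H false true) => // w; move: (sA w) (sB w); rewrite /Ua !inE;
    case: (eqVneq w a) => [->|_]; rewrite ?aYB;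
    case: (_ \in A); case: (_ \in B); case: (_ \in YA); case: (_ \in YB) => //=.
  + apply: (H true false) => // w; move: (sA w) (sB w); rewrite /Ua !inE;
    case: (eqVneq w a) => [->|_]; rewrite ?aYB;
    case: (_ \in A); case: (_ \in B); case: (_ \in YA); case: (_ \in YB) => //=.
- case aYA: (a \in YA).
  + apply: (H false true) => // w; move: (sA w) (sB w); rewrite /Ua !inE;
    case: (eqVneq w a) => [->|_]; rewrite ?aYA;
    case: (_ \in A); case: (_ \in B); case: (_ \in YA); case: (_ \in YB) => //=.
  + apply: (H true false) => // w; move: (sA w) (sB w); rewrite /Ua !inE;
    case: (eqVneq w a) => [->|_]; rewrite ?aYA;
    case: (_ \in A); case: (_ \in B); case: (_ \in YA); case: (_ \in YB) => //=.
- apply: (H false false) => // w; move: (sA w) (sB w); rewrite /Ua !inE;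
  case: (w \in A); case: (w \in B); case: (w \in YA); case: (w \in YB) => //=.
Qed.


Lemma f_submod (E : finType) (D : {set {set E}}) rho a (A B : {set E}) :
  U_matroid D rho -> A \in Dext D a -> B \in Dext D a ->
  rho_gen D rho a (A :|: B) + rho_gen D rho a (A :&: B) <=
  rho_gen D rho a A + rho_gen D rho a B.
Proof.
move=> hM hA hB; have := hM; case=> [hL r0 rm rs ru].
have [_ _ hU hI _] := Dext_lattice a hL.
have [hD0 hDT hDU hDI _] := hL.
have [YA [kA [hYA -> sA]]] := f_rep hM hA.
have [YB [kB [hYB -> sB]]] := f_rep hM hB.
have [ku [ki [e su si]]] := choose_k sA sB.
have hu := f_bound hM (hU _ _ hA hB) (hDU _ _ hYA hYB) su.
have hi := f_bound hM (hI _ _ hA hB) (hDI _ _ hYA hYB) si.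
have hs := rs YA YB hYA hYB.
apply: leq_trans (leq_add hu hi) _.
by rewrite addnACA e [X in _ <= X]addnACA leq_add2r.
Qed.


Lemma f_unit (E : finType) (D : {set {set E}}) rho a (A : {set E}) e :
  U_matroid D rho -> A \in Dext D a -> A :|: [set e] \in Dext D a ->
  rho_gen D rho a (A :|: [set e]) <= (rho_gen D rho a A).+1.
Proof.
move=> hM hA hB; have := hM; case=> [hL r0 rm rs ru].
have [hD0 hDT hDU hDI hDA] := hL.
case eA: (e \in A).
  by rewrite (setUidPl _) ?sub1set // leqnSn.
set B := A :|: [set e] in hB *.
have eB : e \in B by rewrite /B !inE eqxx orbT.
case AD: (A \in D); case BD: (B \in D).
- by rewrite !fD //; apply: ru.
- have [hBa aB] := Dext_out hB (negbT BD).
  case: (eqVneq e a) => [ea|nea].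
    rewrite (fD _ _ AD) -addn1; apply: (f_bound (k:=true)) => //.
    by rewrite /B /Ua ea subxx.
  have aA : a \in A by move: aB; rewrite /B !inE eq_sym (negbTE nea) orbF.
  have : A :|: (B :\ a) \in D by apply: hDU.
  suff -> : A :|: (B :\ a) = B by rewrite BD.
  apply/setP=> w; rewrite /B !inE; case: (eqVneq w a) => [->|] /=; rewrite ?aA //; by case: (w \in A).
- have [hAa aA] := Dext_out hA (negbT AD).
  have nea : e != a by apply/eqP=> ea; rewrite ea aA in eA.
  have hs := supD_in A hDT hDI.
  have sAs := supD_sup D A.
  have ssB : supD D A \subset B by apply: supD_min => //; apply: subsetUl.
  have esup : e \in supD D A.
    apply/negPn/negP=> ens; move: AD.
    suff <- : supD D A = A by rewrite hs.
    apply/eqP; rewrite eqEsubset sAs andbT; apply/subsetP=> w ws.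
    move: (subsetP ssB w ws); rewrite /B !inE => /orP[]// /eqP we.
    by rewrite -we ws in ens.
  have Bs : B \subset supD D A by apply/subsetP=> w; rewrite /B !inE => /orP[/(subsetP sAs)|/eqP->].
  rewrite (fD _ _ BD).
  have [h1 h2 h3 [e1|e2]] := f_out hM hA (negbT AD).
    by rewrite e1; apply: leq_trans (leqnSn _); apply: rm.
  rewrite e2.
  have hz : a \in B :\: (A :\ a) by rewrite /B !inE eqxx aA.
  have [y hy hyD] := access_top hL hAa BD (subset_trans (subsetDl A [set a]) (subsetUl A [set e])) hz.
  have eBy : B :\ y :|: [set y] = B.
    apply/setP=> w; rewrite /B !inE; case: (eqVneq w y) => [->|] //=; rewrite ?orbT ?orbF //.
    by move: hy; rewrite /B !inE => /andP[_ ->].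
  have := ru _ y hyD; rewrite eBy => /(_ BD) h.
  apply: leq_trans h _; rewrite !ltnS.
  move: hy; rewrite /B !inE => /andP[hyS /orP[yA|/eqP ye]].
    have ya : y = a by apply/eqP; move: hyS; rewrite yA andbT negbK.
    have eq : (A :\ a) :|: [set e] = B :\ y.
      apply/setP=> w; rewrite /B !inE ya; case: (eqVneq w e) => [->|]; rewrite ?nea ?orbT ?orbF //=.
    by have := ru _ e hAa; rewrite eq => /(_ hyD).
  have eq : (A :\ a) :|: [set a] = B :\ y.
    apply/setP=> w; rewrite /B !inE ye; case: (eqVneq w a) => [->|]; rewrite ?nea ?aA ?orbT ?orbF //=.
    by rewrite eq_sym nea. by case: (eqVneq w e) => [->|]; rewrite ?eA ?orbF ?andbT //=.
  by have := ru _ a hAa; rewrite eq => /(_ hyD).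
- have [hAa aA] := Dext_out hA (negbT AD).
  have [hBa aB] := Dext_out hB (negbT BD).
  have nea : e != a by apply/eqP=> ea; rewrite ea aA in eA.
  have eq : (A :\ a) :|: [set e] = B :\ a.
    by apply/setP=> w; rewrite /B !inE; case: (eqVneq w e) => [->|]; rewrite ?nea ?orbT ?orbF.
  have hru : rho (B :\ a) <= (rho (A :\ a)).+1.
    by have := ru _ e hAa; rewrite eq => /(_ hBa).
  have [_ h2 _ _] := f_out hM hB (negbT BD).
  have [h1' _ _ [e1|e2]] := f_out hM hA (negbT AD); last first.
    by rewrite e2; apply: leq_trans h2 _.
  have hs := supD_in A hDT hDI.
  have sAs := supD_sup D A.
  have hb : rho_gen D rho a B <= rho (supD D A :|: (B :\ a)) + false.
    apply: f_bound => //; first by apply: hDU.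
    rewrite /Ua setU0; apply/subsetP=> w; rewrite /B !inE.
    case: (eqVneq w a) => [->|] /=; first by rewrite (subsetP sAs a aA).
    by move=> _ ->; rewrite orbT.
  have hsub := rs _ _ hs hBa.
  have hm : rho (A :\ a) <= rho (supD D A :&: (B :\ a)).
    apply: rm => //; first by apply: hDI.
    rewrite subsetI (subset_trans (subsetDl A [set a]) sAs) /=.
    by rewrite -eq subsetUl.
  rewrite e1; apply: leq_trans hb _; rewrite addn0.
  have h5 : rho (supD D A :|: (B :\ a)) + rho (A :\ a) <= (rho (supD D A)).+1 + rho (A :\ a).
    apply: leq_trans (leq_add (leqnn _) hm) _; apply: leq_trans hsub _.
    by rewrite addSnnS leq_add2l.
  by rewrite leq_add2r in h5.
Qed.

Theorem theorem4p10 (E : finType) (D : {set {set E}}) (rho : {set E} -> nat)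
    (a : E) :
  U_matroid D rho -> [set a] \notin D ->
  U_matroid (Dext D a) (rho_gen D rho a) /\
  lattice_extension D rho (Dext D a) (rho_gen D rho a).
Proof.
move=> hM ha; have := hM; case=> [hL r0 rm rs ru].
have [hD0 _ _ _ _] := hL.
have hM' : U_matroid (Dext D a) (rho_gen D rho a).
  split.
  - exact: Dext_lattice.
  - by rewrite fD.
  - by move=> A B hA hB; apply: f_mono.
  - by move=> A B hA hB; apply: f_submod.
  - by move=> A e hA hB; apply: f_unit.
split => //; split => //.
  by apply/subsetP => X; apply: Dext_in.
by move=> A hA; apply: fD.
Qed.
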